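(* Let $(\mathcal{X},\rho)$ be a metric space, $U\subset\mathcal{X}$, and $r>0$. For any process $\mathbb{X}=(X_n)_{n\ge0}$ in $\mathcal{X}$ and any nearest neighbor process $(\tilde X_n)_{n\ge1}$, the number of $(U,r)$-separated events is bounded by the $r$-packing number of $U$: \[\sum_{n=1}^\infty\mathbb{1}\{E_n^{U,r}\text{ occurs}\}\le\mathcal{P}_r(U).\]
   Context: A nearest neighbor process is any $(\tilde X_n)_{n\ge1}$ with $\tilde X_n\in\arg\min_{x\in\{X_0,\dots,X_{n-1}\}}\rho(X_n,x)$. The $r$-separated event at time $n$ is $E_n^r=\{\rho(X_n,\tilde X_n)\ge r\}$, and the $(U,r)$-separated event is $E_n^{U,r}=E_n^r\cap\{X_n\in U\}$. A set $Z$ is an $r$-packing if $\rho(z,z')\ge r$ for all distinct $z,z'\in Z$; $\mathcal{P}_r(U)$ is the maximum size of an $r$-packing contained in $U$ (possibly $+\infty$). *)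

(* Defs.v *)
From HB Require Import structures.
From mathcomp Require Import all_boot all_order all_algebra.
From mathcomp Require Import all_classical all_reals all_analysis.
Set Implicit Arguments. Unset Strict Implicit. Unset Printing Implicit Defensive.
Import Order.TTheory GRing.Theory Num.Theory.
Local Open Scope classical_set_scope.
Local Open Scope ring_scope.

Definition is_metric (R : realType) (T : Type) (rho : T -> T -> R) : Prop :=
  (forall x y, 0 <= rho x y) /\
  (forall x y, rho x y = 0 <-> x = y) /\
  (forall x y, rho x y = rho y x) /\
  (forall x y z, rho x z <= rho x y + rho y z).

Definition nn_process (R : realType) (T : Type) (rho : T -> T -> R)
  (X : nat -> T) (Xt : nat -> T) : Prop :=
  forall n, (1 <= n)%N ->
    (exists k, (k < n)%N /\ Xt n = X k) /\
    (forall k, (k < n)%N -> rho (X n) (Xt n) <= rho (X n) (X k)).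

Definition sep_event (R : realType) (T : Type) (rho : T -> T -> R)
  (X Xt : nat -> T) (U : set T) (r : R) (n : nat) : Prop :=
  r <= rho (X n) (Xt n) /\ U (X n).

Definition is_packing (R : realType) (T : Type) (rho : T -> T -> R)
  (U : set T) (r : R) (n : nat) (f : 'I_n -> T) : Prop :=
  injective f /\ (forall i, U (f i)) /\
  (forall i j, i != j -> r <= rho (f i) (f j)).

Definition packing_number (R : realType) (T : Type) (rho : T -> T -> R)
  (U : set T) (r : R) : \bar R :=
  ereal_sup [set (n%:R)%:E | n in [set n : nat | exists f : 'I_n -> T,
                                       is_packing rho U r f]].

(* Main.v *)
Require Import Defs.
From HB Require Import structures.
From mathcomp Require Import all_boot all_order all_algebra.
From mathcomp Require Import all_classical all_reals all_analysis.
Import Order.TTheory GRing.Theory Num.Theory.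
Local Open Scope classical_set_scope.
Local Open Scope ring_scope.

Lemma sum_count_nat (J : Type) (s : seq J) (a : pred J) :
  (\sum_(j <- s) (a j : nat))%N = count a s.
Proof. elim: s => [|x s IH]; by rewrite ?big_nil ?big_cons ?IH. Qed.

Lemma sep_pair {R : realType} {T : Type} {rho : T -> T -> R}
  {U : set T} {r : R} {X Xt : nat -> T} :
  is_metric rho -> nn_process rho X Xt -> forall a b, (a < b)%N ->
  sep_event rho X Xt U r b -> r <= rho (X a) (X b).
Proof.
move=> [_ [_ [sym _]]] nn a b ab [sb _].
have [_ H] := nn b (leq_ltn_trans (leq0n a) ab).
by rewrite sym; apply: le_trans sb (H a ab).
Qed.

Theorem lemma4 (R : realType) (T : Type) (rho : T -> T -> R)
  (U : set T) (r : R) (X Xt : nat -> T) :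
  is_metric rho -> 0 < r -> nn_process rho X Xt ->
  (\sum_(1 <= n <oo) ((asbool (sep_event rho X Xt U r n))%:R)%:E
     <= packing_number rho U r)%E.
Proof.
move=> met r0 nn.
set b := fun n => asbool (sep_event rho X Xt U r n).
apply: lime_le.
  by apply: is_cvg_nneseries => n _ _; rewrite lee_fin.
apply: nearW => N.
rewrite sumEFin.
have -> : (\sum_(1 <= i < N) (b i)%:R) = ((\sum_(1 <= i < N) (b i : nat))%N%:R : R).
  by rewrite natr_sum.
rewrite sum_count_nat -size_filter.
set S := [seq n <- index_iota 1 N | b n].
apply: ereal_sup_ubound; exists (size S) => //.
have US : uniq S by rewrite filter_uniq // iota_uniq.
have sepS : forall i, (i < size S)%N -> sep_event rho X Xt U r (nth 0%N S i).
  move=> i iS; have : nth 0%N S i \in S by rewrite mem_nth.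
  by rewrite mem_filter => /andP [/asboolP].
have key : forall i j : 'I_(size S), i != j -> r <= rho (X (nth 0%N S i)) (X (nth 0%N S j)).
  move=> i j ij.
  have ne : nth 0%N S i != nth 0%N S j by rewrite nth_uniq.
  case: (ltngtP (nth 0%N S i) (nth 0%N S j)) ne => // [lt|gt] _.
    exact: (sep_pair met nn _ _ lt (sepS j (ltn_ord j))).
  move: met => [m1 [m2 [sym m4]]].
  rewrite sym; exact: (sep_pair (conj m1 (conj m2 (conj sym m4))) nn _ _ gt (sepS i (ltn_ord i))).
exists (fun i => X (nth 0%N S i)); split; [|split].
- move=> i j eq; apply/eqP; apply: contraT => ij.
  have := key i j ij; rewrite eq.
  move: met => [_ [m2 _]]; have -> : rho (X (nth 0%N S j)) (X (nth 0%N S j)) = 0 by apply/m2.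
  by rewrite leNgt r0.
- by move=> i; have [] := sepS i (ltn_ord i).
- exact: key.
Qed.
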